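(* Let $m\geq n$ and $k$ be integers with $2\leq k\leq n$. Then $$ext(m,n,(k-1)K_2)+2\leq rb(K_{m,n},kK_2)\leq ext(m,n,kK_2)+1.$$
   Context: $kK_2$ denotes a matching with $k$ edges, and $K_{m,n}$ the complete bipartite graph with parts of sizes $m$ and $n$. For a graph $H$, $ext(m,n,H)$ is the maximum number of edges of a bipartite graph with bipartition $A\cup B$, $|A|=m$, $|B|=n$, containing no subgraph isomorphic to $H$. An edge-coloring contains a rainbow copy of $H$ if there is a subgraph isomorphic to $H$ whose edges have pairwise distinct colors. $rb(G,H)$ is the minimum number $r$ such that every edge-coloring of $G$ using at least $r$ colors contains a rainbow copy of $H$ (equivalently, one plus the maximum number of colors in an edge-coloring of $G$ with no rainbow $H$). *)

(* Defs.v *)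
From mathcomp Require Import all_boot.
From mathcomp Require Import boolp.
Set Implicit Arguments. Unset Strict Implicit. Unset Printing Implicit Defensive.

(* Bipartite graphs with bipartition A = 'I_m, B = 'I_n are edge sets
   E : {set 'I_m * 'I_n}; an edge is a pair (a, b). K_{m,n} is [set: 'I_m * 'I_n]. *)

Notation edge m n := (prod (ordinal m) (ordinal n)).

Definition is_matching (m n : nat) (M : {set edge m n}) : bool :=
  [forall e1 in M, forall e2 in M,
     (e1 != e2) ==> ((e1.1 != e2.1) && (e1.2 != e2.2))].

Definition contains_kK2 (m n : nat) (E : {set edge m n}) (k : nat) : bool :=
  [exists M : {set edge m n}, [&& M \subset E, #|M| == k & is_matching M]].

Definition ext_kK2 (m n k : nat) : nat :=
  \max_(E : {set edge m n} | ~~ contains_kK2 E k) #|E|.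

Definition ncolors (m n : nat) (c : edge m n -> nat) : nat :=
  size (undup [seq c e | e <- enum [set: edge m n]]).

Definition has_rainbow_kK2 (m n : nat) (c : edge m n -> nat) (k : nat) : bool :=
  [exists M : {set edge m n},
     [&& #|M| == k, is_matching M &
         [forall e1 in M, forall e2 in M, (c e1 == c e2) ==> (e1 == e2)]]].

Definition rb_good (m n k r : nat) : Prop :=
  forall c : edge m n -> nat, r <= ncolors c -> has_rainbow_kK2 c k.

Lemma rb_good_ex (m n k : nat) : exists r, `[< rb_good m n k r >].
Proof.
exists (m * n).+1; apply/asboolP => c H; exfalso.
move: H; rewrite ltnNge => /negP; apply.
rewrite /ncolors; apply: leq_trans (size_undup _) _.
by rewrite size_map -cardE cardsT card_prod !card_ord.
Qed.

Definition rb_kK2 (m n k : nat) : nat := ex_minn (rb_good_ex m n k).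

(* Main.v *)
Require Import Defs.
From mathcomp Require Import all_boot.
From mathcomp Require Import boolp.

Lemma matching_sub m n (M M' : {set edge m n}) :
  M' \subset M -> is_matching M -> is_matching M'.
Proof.
move=> sub /forallP H; apply/forallP => e1; apply/implyP => h1.
apply/forallP => e2; apply/implyP => h2.
have := H e1; move/implyP/(_ (subsetP sub _ h1))/forallP/(_ e2)/implyP.
by apply; apply: (subsetP sub).
Qed.

Lemma upper m n k (c : edge m n -> nat) :
  ext_kK2 m n k + 1 <= ncolors c -> has_rainbow_kK2 c k.
Proof.
move=> H.
pose E := [set e | [forall e', (c e' == c e) ==> (enum_rank e <= enum_rank e')]].
have injE : {in E &, forall e1 e2, c e1 = c e2 -> e1 = e2}.
  move=> e1 e2; rewrite !inE => /forallP h1 /forallP h2 ce.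
  apply: enum_rank_inj; apply: val_inj; apply/eqP; rewrite eqn_leq.
  have := h1 e2; rewrite ce eqxx /= => ->.
  by have := h2 e1; rewrite ce eqxx /= => ->.
have cov : forall e, exists2 x, x \in E & c x = c e.
  move=> e.
  case: (@arg_minnP _ e (fun x => c x == c e) (fun x => nat_of_ord (enum_rank x)) (eqxx _)).
  move=> x /eqP cx hx; exists x => //.
  rewrite inE; apply/forallP => y; apply/implyP => /eqP cy.
  by apply: hx; rewrite cy cx.
have cardE : ncolors c <= #|E|.
  rewrite /ncolors cardE -(size_map c).
  apply: uniq_leq_size; first exact: undup_uniq.
  move=> x; rewrite mem_undup => /mapP [e _ ->].
  have [y yE <-] := cov e.
  by apply: map_f; rewrite mem_enum.
have : contains_kK2 E k.
  case: (boolP (contains_kK2 E k)) => // nc; exfalso.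
  have h : #|E| <= ext_kK2 m n k.
    exact: (@leq_bigmax_cond _ (fun E : {set edge m n} => ~~ contains_kK2 E k) (fun E : {set edge m n} => #|E|) E nc).
  have := leq_trans H cardE; rewrite addn1 ltnNge h //.
case/existsP => M /and3P [sub cM mM].
rewrite /has_rainbow_kK2; apply/existsP; exists M; rewrite cM mM /=.
apply/forallP => e1; apply/implyP => h1; apply/forallP => e2; apply/implyP => h2.
apply/implyP => /eqP ce; apply/eqP; apply: injE => //; exact: (subsetP sub).
Qed.

Lemma full_contains m n j : j <= n -> n <= m -> contains_kK2 [set: edge m n] j.
Proof.
move=> jn nm.
have Hn : j <= n := jn.
have Hm : j <= m := leq_trans jn nm.
pose f := fun i : 'I_j => (widen_ord Hm i, widen_ord Hn i).
have finj : injective f.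
  move=> i1 i2 [] e _; apply: ord_inj; exact: e.
rewrite /contains_kK2; apply/existsP; exists [set f i | i in 'I_j].
rewrite subsetT card_imset // card_ord eqxx /=.
apply/forallP => e1; apply/implyP => /imsetP [i1 _ ->].
apply/forallP => e2; apply/implyP => /imsetP [i2 _ ->].
apply/implyP => ne.
have ne' : nat_of_ord i1 != nat_of_ord i2.
  by apply: contra ne => /eqP /val_inj ->.
by rewrite /f /= -!val_eqE /= ne'.
Qed.

Lemma lower m n k : 2 <= k -> k <= n -> n <= m ->
  exists c : edge m n -> nat, ext_kK2 m n k.-1 + 1 <= ncolors c /\ ~~ has_rainbow_kK2 c k.
Proof.
move=> k2 kn nm.
have ne : 0 < #|[pred E : {set edge m n} | ~~ contains_kK2 E k.-1]|.
  apply/card_gt0P; exists set0; rewrite inE /=.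
  apply/negP => /existsP [M /and3P [s cM _]].
  move: s; rewrite subset0 => /eqP M0; move: cM; rewrite M0 cards0.
  by case: k k2 kn => [|[|k]].
have [G GP Gmax] := eq_bigmax_cond (fun E : {set edge m n} => #|E|) ne.
move: GP; rewrite inE /= => GP.
have : ~~ (G == setT).
  apply/negP => /eqP GT; move: GP; rewrite GT full_contains //.
  by apply: leq_trans kn; rewrite leq_pred.
move=> /negP GT.
have [e0 _ e0G] : exists2 e0, e0 \in [set: edge m n] & e0 \notin G.
  by apply/subsetPn; rewrite subTset; apply/negP.
pose c := fun e : edge m n => if e \in G then (nat_of_ord (enum_rank e)).+1 else 0.
exists c; split.
  have -> : ext_kK2 m n k.-1 = #|G|.
    by rewrite /ext_kK2 -Gmax; apply: eq_bigl => E; rewrite inE.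
  rewrite addn1 /ncolors.
  have <- : size (0 :: [seq (nat_of_ord (enum_rank e)).+1 | e <- enum G]) = #|G|.+1.
    by rewrite /= size_map cardE.
  apply: uniq_leq_size.
    rewrite /= map_inj_uniq ?enum_uniq; last first.
      by move=> x y [] /val_inj /enum_rank_inj.
    by rewrite andbT; apply/mapP => [[x _]].
  move=> x; rewrite mem_undup inE => /orP [/eqP -> | /mapP [e eG ->]].
    apply/mapP; exists e0; first by rewrite mem_enum inE.
    by rewrite /c (negbTE e0G).
  apply/mapP; exists e; first by rewrite mem_enum inE.
  by rewrite /c -(mem_enum (mem G)) eG.
rewrite /has_rainbow_kK2; apply/negP => /existsP [M /and3P [/eqP cM mM /forallP rb]].
have inj : forall e1 e2, e1 \in M -> e2 \in M -> c e1 = c e2 -> e1 = e2.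
  move=> e1 e2 h1 h2 ce.
  have := rb e1; rewrite h1 /= => /forallP /(_ e2); rewrite h2 /= ce eqxx /=.
  by move/eqP.
have [e eM eP] : exists2 e, e \in M & forall f, f \in M -> f != e -> f \in G.
  case: (boolP [exists e in M, e \notin G]).
    case/existsP => e /andP [eM eG]; exists e => // f fM fe.
    apply/negPn/negP => fG; move/negP: fe; apply.
    by apply/eqP; apply: inj => //; rewrite /c (negbTE fG) (negbTE eG).
  move/existsPn => h.
  have : 0 < #|M| by rewrite cM; apply: leq_trans k2.
  case/card_gt0P => e eM; exists e => // f fM _.
  by have := h f; rewrite fM /= negbK.
move/negP: GP; apply; rewrite /contains_kK2; apply/existsP; exists (M :\ e).
apply/and3P; split.
- apply/subsetP => f; rewrite !inE => /andP [fe fM]; exact: eP.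
- by have := cardsD1 e M; rewrite eM cM add1n => ->.
- by apply: matching_sub mM; apply: subsetDl.
Qed.

Theorem mainTheorem3 (m n k : nat) :
  n <= m -> 2 <= k -> k <= n ->
  ext_kK2 m n k.-1 + 2 <= rb_kK2 m n k <= ext_kK2 m n k + 1.
Proof.
move=> nm k2 kn; rewrite /rb_kK2.
case: ex_minnP => r /asboolP good min; apply/andP; split.
  rewrite leqNgt; apply/negP => lt.
  have [c [hc nr]] := lower m n k k2 kn nm.
  move/negP: nr; apply; apply: good.
  apply: leq_trans hc; by rewrite addn1; rewrite addn2 in lt.
apply: min; apply/asboolP => c hc; exact: upper.
Qed.
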